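(* Let $k \in \mathbb{Z}_{\geq 0}$ and let $\gamma_X = (X, d_X(\cdot))$ be a $(2k+2)$-DMS. Put $\mathbb{V} = H_k(\mathcal{R}^{\mathrm{lev}}(\gamma_X)) : \mathbf{Dyn} \to \mathbf{Vec}$. Then for any $p, q \in \operatorname{supp} \mathbb{V}$ with $p \leq q$, we have $\mathcal{R}^{\mathrm{lev}}(\gamma_X)(p) = \mathcal{R}^{\mathrm{lev}}(\gamma_X)(q)$ as abstract simplicial complexes, and the structure map $\mathbb{V}(p \leq q)$ is an isomorphism.
   Context: A dynamic metric space (DMS) $\gamma_X = (X, d_X(\cdot))$ is a finite set $X$ with a function $d_X : \mathbb{R} \times X \times X \to \mathbb{R}_{\geq 0}$ such that for each $t$, $d_X(t)$ is a pseudometric on $X$, and for each $x,x'$ the map $t \mapsto d_X(t)(x,x')$ is continuous. An $n$-DMS is a DMS with $|X| = n$. For a compact interval $I \subset \mathbb{R}$, $d_X(I)(x,x') := \inf_{t \in I} d_X(t)(x,x')$; this is a semimetric (symmetric, zero on the diagonal). For a semimetric $d$ on $X$ and $\delta \geq 0$, the Rips complex $\mathcal{R}_\delta(d)$ is the abstract simplicial complex on $X$ whose simplices are the finite nonempty $\sigma \subseteq X$ with $d(x,y) \leq \delta$ for all $x,y \in \sigma$. $\mathbf{Dyn}$ is the poset of pairs $(I,\delta)$ with $I$ a compact interval of $\mathbb{R}$ and $\delta \ge 0$, ordered by $(I,\delta) \leq (I',\delta')$ iff $I \subseteq I'$ and $\delta \leq \delta'$. The spatiotemporal Rips filtration $\mathcal{R}^{\mathrm{lev}}(\gamma_X)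 : \mathbf{Dyn} \to \mathbf{Simp}$ sends $(I,\delta)$ to $\mathcal{R}_\delta(d_X(I))$ and relations to inclusions; $H_k(\mathcal{R}^{\mathrm{lev}}(\gamma_X))$ is its composition with degree-$k$ simplicial homology over a fixed field $\mathbb{F}$. For such a $(2k+2)$-DMS, each $\mathbb{V}(p)$ has dimension $0$ or $1$, and $\operatorname{supp}\mathbb{V} := \{p \in \mathbf{Dyn} : \mathbb{V}(p) \cong \mathbb{F}\}$. *)

(* Defs.v *)
From HB Require Import structures.
From mathcomp Require Import all_boot all_order all_algebra.
From mathcomp Require Import all_classical all_reals all_analysis.

Set Implicit Arguments.
Unset Strict Implicit.
Unset Printing Implicit Defensive.

Import Order.TTheory GRing.Theory Num.Theory.
Import numFieldNormedType.Exports.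
Local Open Scope ring_scope.

Definition is_pseudometric (R : realType) (T : finType) (m : T -> T -> R) :=
  [/\ forall x y, 0 <= m x y,
      forall x, m x x = 0,
      forall x y, m x y = m y x &
      forall x y z, m x z <= m x y + m y z].

Definition isDMS (R : realType) (T : finType) (d : R -> T -> T -> R) :=
  (forall t, is_pseudometric (d t)) /\
  (forall x y, continuous (fun t : R => d t x y)).

Definition dI (R : realType) (T : finType) (d : R -> T -> T -> R)
  (a b : R) (x y : T) : R :=
  inf [set d t x y | t in `[a, b]%classic].

(* Rips complex: an abstract simplicial complex on T is represented    *)
(* by its set of simplices (nonempty subsets of T).                    *)

Definition rips (R : realType) (T : finType) (m : T -> T -> R) (delta : R)
  : {set {set T}} :=
  [set s : {set T} | (s != finset.set0) &&
     [forall x in s, forall y in s, `[< m x y <= delta >]]].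

(* The spatiotemporal Rips filtration at (I, delta) with I = [a, b]. *)
Definition Rlev (R : realType) (T : finType) (d : R -> T -> T -> R)
  (a b delta : R) : {set {set T}} :=
  rips (dI d a b) delta.

(* All chain groups live in the ambient F-vector space                 *)
(* {ffun {set T} -> F} (formal combinations of subsets of T).          *)
(* Orientation: simplices are ordered by enum_rank on T.               *)

Section Homology.
Variables (F : fieldType) (T : finType).

Definition chainT := {ffun {set T} -> F^o}.

Definition delta_ch (s : {set T}) : chainT := [ffun u => (u == s)%:R].

(* Incidence coefficient [s : u] of the simplicial boundary: nonzero iff
   u is a face of s of codimension one, u nonempty (unreduced homology);
   sign (-1)^i where i is the position of the removed vertex in s. *)
Definition incid (s u : {set T}) : F :=
  if [&& u \subset s, #|s :\: u| == 1%N & u != finset.set0]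
  then (-1) ^+ (\sum_(x in s :\: u)
                  #|[set y in s | (enum_rank y < enum_rank x)%N]|)
  else 0.

Definition bd_fun (c : chainT) : chainT :=
  [ffun u => \sum_(s : {set T}) c s * incid s u].

Definition bd : 'End(chainT) := linfun bd_fun.

Definition chains (k : nat) (K : {set {set T}}) : {vspace chainT} :=
  <<[seq delta_ch s | s <- enum [set s in K | #|s| == k.+1]]>>%VS.

Definition cycles (k : nat) (K : {set {set T}}) : {vspace chainT} :=
  (chains k K :&: lker bd)%VS.

Definition boundaries (k : nat) (K : {set {set T}}) : {vspace chainT} :=
  (bd @: chains k.+1 K)%VS.

(* dim H_k(K) = dim Z_k(K) - dim B_k(K)  (B_k(K) is a subspace of Z_k(K)). *)
Definition homology_dim (k : nat) (K : {set {set T}}) : nat :=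
  (\dim (cycles k K) - \dim (boundaries k K))%N.

(* For K a subcomplex of L, the map H_k(K) -> H_k(L), [z] |-> [z],
   induced by inclusion is an isomorphism: it is injective
   (a cycle of K bounding in L bounds in K) and surjective
   (every cycle of L is homologous in L to a cycle of K). *)
Definition induced_iso (k : nat) (K L : {set {set T}}) : bool :=
  (cycles k K :&: boundaries k L <= boundaries k K)%VS &&
  (cycles k L <= cycles k K + boundaries k L)%VS.

End Homology.

(* Main.v *)
Require Import Defs.
From HB Require Import structures.
From mathcomp Require Import all_boot all_order all_algebra.
From mathcomp Require Import all_classical all_reals all_analysis.
From mathcomp Require Import zify.
Import Order.TTheory GRing.Theory Num.Theory.
Local Open Scope ring_scope.
Set Implicit Arguments.
Unset Strict Implicit.
Unset Printing Implicit Defensive.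

Section Chains.
Variables (F : fieldType) (T : finType).
Local Notation chain := (chainT F T).
Local Notation dl := (@delta_ch F T).

Lemma scFo (a : F) (b : F^o) : a *: b = a * b. Proof. by []. Qed.

Definition ext (f : {set T} -> chain) (c : chain) : chain :=
  \sum_(s : {set T}) c s *: f s.

Lemma extE f c u : ext f c u = \sum_(s : {set T}) c s * f s u.
Proof. by rewrite /ext sum_ffunE; apply: eq_bigr => s _; rewrite ffunE. Qed.

Lemma ext_lin f : linear (ext f).
Proof.
move=> a c1 c2; apply/ffunP => u; rewrite !ffunE !extE.
rewrite scaler_sumr -big_split /=.
by apply: eq_bigr => s _; rewrite !ffunE mulrDl -!mulrA.
Qed.

Lemma extD f c1 c2 : ext f (c1 + c2) = ext f c1 + ext f c2.
Proof. by have := ext_lin f 1 c1 c2; rewrite !scale1r. Qed.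
Lemma extZ f a c : ext f (a *: c) = a *: ext f c.
Proof.
apply/ffunP => u; rewrite !ffunE !extE scaler_sumr; apply: eq_bigr => s _.
by rewrite !ffunE scalerAl.
Qed.
Lemma ext0 f : ext f 0 = 0.
Proof. by have := extZ f 0 0; rewrite !scale0r. Qed.
Lemma extN f c : ext f (- c) = - ext f c.
Proof. by rewrite -scaleN1r extZ scaleN1r. Qed.
Lemma extB f c1 c2 : ext f (c1 - c2) = ext f c1 - ext f c2.
Proof. by rewrite extD extN. Qed.

Lemma dlE s u : dl s u = if u == s then 1 else 0.
Proof. by rewrite ffunE; case: eqP. Qed.

Lemma chain_expand (c : chain) : c = \sum_(s : {set T}) c s *: dl s.
Proof.
apply/ffunP=> u; rewrite sum_ffunE (bigD1 u) //= big1 => [|s su].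
  by rewrite !ffunE eqxx scFo mulr1 addr0.
by rewrite !ffunE eq_sym (negPf su) scFo mulr0.
Qed.

Lemma ext_dl f s : ext f (dl s) = f s.
Proof.
rewrite /ext (bigD1 s) //= big1 => [|t ts]; first by rewrite dlE eqxx scale1r addr0.
by rewrite dlE (negPf ts) scale0r.
Qed.

Definition supp (P : pred {set T}) (c : chain) := forall s, c s != 0 -> P s.

Lemma supp_ext (P Q : pred {set T}) f c :
  supp P c -> (forall s, P s -> supp Q (f s)) -> supp Q (ext f c).
Proof.
move=> Pc Pf u; rewrite extE => nz; have [//|Qu] := boolP (Q u).
suff: \sum_s c s * f s u = 0 by move/eqP; rewrite (negPf nz).
apply/big1 => s _; have [/eqP->|/Pc/Pf Qs] := boolP (c s == 0); first by rewrite mul0r.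
have [/eqP->|/Qs] := boolP (f s u == 0); first by rewrite mulr0.
by rewrite (negPf Qu).
Qed.

Lemma suppD P c1 c2 : supp P c1 -> supp P c2 -> supp P (c1 + c2).
Proof.
move=> h1 h2 s; rewrite ffunE; have [/eqP->|/h1 //] := boolP (c1 s == 0).
by rewrite add0r => /h2.
Qed.
Lemma suppN P c : supp P c -> supp P (- c).
Proof. by move=> h s; rewrite ffunE oppr_eq0 => /h. Qed.
Lemma supp0 P : supp P 0.
Proof. by move=> s; rewrite ffunE eqxx. Qed.
Lemma supp_sub P Q c : {subset P <= Q} -> supp P c -> supp Q c.
Proof. by move=> PQ h s /h /PQ. Qed.

Definition pos (s : {set T}) (x : T) : nat :=
  #|[set y in s | (enum_rank y < enum_rank x)%N]|.

Definition bdB (s : {set T}) : chain :=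
  \sum_(x in s) (-1) ^+ pos s x *: dl (s :\ x).
Local Notation bd' := (ext bdB).

Definition coneB (v : T) (s : {set T}) : chain :=
  (-1) ^+ pos (v |: s) v *: dl (v |: s).
Local Notation cone v := (ext (coneB v)).


HB.instance Definition _ f := GRing.isLinear.Build _ _ _ _ (ext f) (ext_lin f).

Lemma card_U1_filter (w : T) (A : {set T}) (P : pred T) : w \notin A ->
  #|[set y in w |: A | P y]| = (P w + #|[set y in A | P y]|)%N.
Proof.
move=> wA; have [Pw|Pw] := boolP (P w).
  rewrite (_ : [set y in w |: A | P y] = w |: [set y in A | P y]).
    by rewrite cardsU1 inE (negPf wA).
  by apply/setP => y; rewrite !inE; case: eqP => [->|]; rewrite ?Pw.
rewrite (_ : [set y in w |: A | P y] = [set y in A | P y]) //.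
by apply/setP => y; rewrite !inE; case: eqP => [->|]; rewrite ?(negPf Pw) ?andbF.
Qed.

Lemma pos_U1 (v : T) (s : {set T}) (x : T) : v \notin s -> pos (v |: s) x = (pos s x + (enum_rank v < enum_rank x))%N.
Proof. by move=> vs; rewrite /pos card_U1_filter // addnC. Qed.

Lemma pos_D1 (v : T) (s : {set T}) (x : T) : x \in s -> v \notin s ->
  pos (v |: s) v = (pos (v |: (s :\ x)) v + (enum_rank x < enum_rank v))%N.
Proof.
move=> xs vs; rewrite /pos !card_U1_filter ?ltnn //; last by rewrite inE negb_and vs orbT.
rewrite -{1}(finset.setD1K xs) card_U1_filter ?finset.setD11 //.
by rewrite !add0n addnC.
Qed.

Lemma rank_tot (x v : T) : x != v ->
  ((enum_rank x < enum_rank v) + (enum_rank v < enum_rank x))%N = 1%N.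
Proof.
move=> xv; have : enum_rank x != enum_rank v by rewrite (inj_eq enum_rank_inj).
rewrite neq_ltn => /orP[] h; rewrite h.
  by rewrite ltnNge ltnW.
by rewrite ltnNge ltnW.
Qed.

Definition vfree (v : T) := [pred s : {set T} | v \notin s].

Lemma coneE v (c : chain) u : supp (vfree v) c ->
  cone v c u = if v \in u then (-1) ^+ pos u v * c (u :\ v) else 0.
Proof.
move=> vc; rewrite extE; case: ifP => vu.
  rewrite (bigD1 (u :\ v)) //= big1 => [|s su].
    by rewrite /coneB ffunE dlE finset.setD1K // eqxx scFo mulr1 addr0 mulrC.
  rewrite /coneB ffunE dlE scFo.
  have [/eqP->|/vc vs] := boolP (c s == 0); first by rewrite mul0r.
  case: eqP => [us|_]; last by rewrite !mulr0.
  by move: su; rewrite us finset.setU1K // eqxx.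
apply: big1 => s _; rewrite /coneB ffunE dlE scFo.
case: eqP => [us|_]; last by rewrite !mulr0.
by move: vu; rewrite us finset.setU11.
Qed.

Lemma sgnD (m n : nat) : (-1) ^+ m * (-1) ^+ n = (-1) ^+ (m + n) :> F.
Proof. by rewrite exprD. Qed.

Lemma homotopyB (v : T) (s : {set T}) : v \notin s -> bd' (coneB v s) + cone v (bdB s) = dl s.
Proof.
move=> vs; rewrite /coneB linearZ /= ext_dl /bdB big_setU1 //= finset.setU1K //.
rewrite linear_sum /= scalerDr addrAC scalerA sgnD addnn -signr_odd odd_double.
rewrite expr0 scale1r -[RHS]addr0 -addrA; congr (_ + _).
rewrite scaler_sumr -big_split /=; apply: big1 => x xs.
have xv : x != v by apply: contraNneq vs => <-.
rewrite linearZ /= ext_dl /coneB scalerA scalerA.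
have -> : (v |: s) :\ x = v |: (s :\ x).
  by apply/setP => y; rewrite !inE; case: (y =P v) => [->|_] /=; first by rewrite andbT eq_sym.
rewrite -scalerDl (pos_U1 x vs) (pos_D1 xs vs) !sgnD.
set a := pos _ v; set p := pos s x.
have e1 : (a + (enum_rank x < enum_rank v) + (p + (enum_rank v < enum_rank x)))%N = (p + a).+1.
  by rewrite addnACA rank_tot // addn1 addnC.
by rewrite e1 exprS mulN1r addrN scale0r.
Qed.

Lemma sum_nz_ex (I : finType) (P : pred I) (G : I -> F) :
  \sum_(i | P i) G i != 0 -> exists i, P i && (G i != 0).
Proof.
move=> nz; apply/existsP; apply: contraR nz; rewrite negb_exists => /forallP h.
by apply/eqP/big1 => i Pi; move: (h i); rewrite Pi /= negbK => /eqP.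
Qed.

Lemma bdB_supp s u : bdB s u != 0 -> exists2 x, x \in s & u = s :\ x.
Proof.
rewrite /bdB sum_ffunE => /sum_nz_ex [x /andP[xs nz]].
move: nz; rewrite ffunE dlE scFo; case: (u =P s :\ x) => [->|_] nz; first by exists x.
by move: nz; rewrite mulr0 eqxx.
Qed.

Lemma bd'E c u : bd' c u = \sum_s c s * bdB s u.
Proof. exact: extE. Qed.

Lemma bd'_vfree v c : supp (vfree v) c -> supp (vfree v) (bd' c).
Proof.
move=> h; apply: (supp_ext h) => s vs u /bdB_supp [x xs ->].
by rewrite /vfree inE !inE negb_and (negPf vs) orbT.
Qed.

Lemma homotopy v c : supp (vfree v) c -> bd' (cone v c) + cone v (bd' c) = c.
Proof.
move=> vc.
have e1 : cone v c = \sum_s c s *: coneB v s by [].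
have e2 : bd' c = \sum_s c s *: bdB s by [].
rewrite {3}(chain_expand c) e1 e2 !linear_sum -big_split /=; apply: eq_bigr => s _.
rewrite !linearZ /= -scalerDr.
have [/eqP->|/vc vs] := boolP (c s == 0); first by rewrite !scale0r.
by congr (_ *: _); rewrite -(homotopyB vs) /coneB linearZ.
Qed.

Lemma sgn2 n : (-1) ^+ n * (-1) ^+ n = 1 :> F.
Proof. by rewrite sgnD addnn -signr_odd odd_double. Qed.

Section Decomp.
Variables (v : T) (z : chain).
Definition zpart : chain := [ffun s : {set T} => if v \in s then 0 else z s].
Definition ypart : chain :=
  [ffun s : {set T} => if v \in s then 0 else (-1) ^+ pos (v |: s) v * z (v |: s)].

Lemma zpart_vfree : supp (vfree v) zpart.
Proof. by move=> s; rewrite ffunE inE; case: (v \in s); rewrite ?eqxx. Qed.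
Lemma ypart_vfree : supp (vfree v) ypart.
Proof. by move=> s; rewrite ffunE inE; case: (v \in s); rewrite ?eqxx. Qed.

Lemma decomp : z = zpart + cone v ypart.
Proof.
apply/ffunP => u; rewrite ffunE (coneE _ ypart_vfree) !ffunE.
case: ifP => vu; last by rewrite addr0.
rewrite finset.setD11 finset.setD1K // mulrA sgn2 mul1r add0r //.
Qed.

Lemma cycle_decomp : bd' z = 0 -> bd' zpart + ypart = 0 /\ bd' ypart = 0.
Proof.
move=> bz.
have h : bd' zpart + ypart - cone v (bd' ypart) = 0.
  have hy : bd' (cone v ypart) = ypart - cone v (bd' ypart).
    by apply/eqP; rewrite eq_sym subr_eq (homotopy ypart_vfree).
  by rewrite -addrA -hy -linearD /= -decomp.
have wv : supp (vfree v) (bd' zpart + ypart).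
  exact: suppD (bd'_vfree zpart_vfree) ypart_vfree.
have w0 : bd' zpart + ypart = 0.
  apply/ffunP => u; rewrite [RHS]ffunE; have [vu|vu] := boolP (v \in u).
    by apply/eqP/negPn/negP => /wv; rewrite inE vu.
  move/ffunP: h => /(_ u); rewrite !ffunE (coneE _ (bd'_vfree ypart_vfree)).
  by rewrite (negPf vu) subr0.
split => //; move: h; rewrite w0 sub0r => /eqP; rewrite oppr_eq0 => /eqP h.
apply/ffunP => u; rewrite [RHS]ffunE; have [vu|vu] := boolP (v \in u).
  by apply/eqP/negPn/negP => /(bd'_vfree ypart_vfree); rewrite inE vu.
move/ffunP: h => /(_ (v |: u)); rewrite !ffunE (coneE _ (bd'_vfree ypart_vfree)).
rewrite finset.setU11 finset.setU1K // => /eqP; rewrite mulf_eq0 signr_eq0 /= => /eqP.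
done.
Qed.
End Decomp.

Section Graph.
Variables (E : rel T) (Erefl : forall x, E x x) (Esym : forall x y, E x y = E y x).

Definition clique (s : {set T}) := [forall x in s, forall y in s, E x y].
Definition Pk (V : {set T}) (j : nat) : pred {set T} :=
  fun s => [&& s \subset V, clique s & #|s| == j.+1].
Definition Acyc j (V : {set T}) := forall z, supp (Pk V j) z -> bd' z = 0 ->
  exists e, supp (Pk V j.+1) e /\ bd' e = z.

Lemma cliqueP (s : {set T}) : reflect (forall x y, x \in s -> y \in s -> E x y) (clique s).
Proof.
apply: (iffP forall_inP) => [h x y xs ys|h x xs].
  by move/forall_inP: (h x xs) => /(_ y ys).
by apply/forall_inP => y ys; apply: h.
Qed.

Lemma clique_sub (s s' : {set T}) : s' \subset s -> clique s -> clique s'.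
Proof.
move=> /fintype.subsetP ss /cliqueP h; apply/cliqueP => x y /ss xs /ss ys; exact: h.
Qed.

Lemma cliqueU1 (v : T) (s : {set T}) : clique s -> (forall x, x \in s -> E v x) -> clique (v |: s).
Proof.
move=> /cliqueP h hv; apply/cliqueP => x y; rewrite !inE.
case/orP => [/eqP->|xs]; case/orP => [/eqP->|ys] //; first exact: hv.
  by rewrite Esym; apply: hv.
exact: h.
Qed.

Lemma Pk_mono (V V' : {set T}) j : V \subset V' -> {subset Pk V j <= Pk V' j}.
Proof.
move=> VV' s /and3P[sV cl cs]; apply/and3P; split => //.
exact: fintype.subset_trans VV'.
Qed.

Lemma cone_supp (V W : {set T}) (v : T) j c : supp (Pk W j) c -> v \notin W -> W \subset V ->
  v \in V -> (forall x, x \in W -> E v x) -> supp (Pk V j.+1) (cone v c).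
Proof.
move=> cW vW WV vV hv.
have vf : supp (vfree v) c.
  by move=> s /cW /and3P[sW _ _]; rewrite inE; apply: contra vW; apply: (fintype.subsetP sW).
move=> u; rewrite (coneE _ vf); case: ifP => vu; last by rewrite eqxx.
rewrite mulf_eq0 negb_or signr_eq0 /= => /cW /and3P[sW cl /eqP cs].
have -> : u = v |: (u :\ v) by rewrite finset.setD1K.
apply/and3P; split.
- rewrite finset.subUset finset.sub1set vV /=; exact: fintype.subset_trans WV.
- by apply: cliqueU1 => // x /(fintype.subsetP sW); apply: hv.
- by rewrite cardsU1 finset.setD11 cs.
Qed.

Definition Nb (V : {set T}) (v : T) := [set x in V | (x != v) && E v x].

Lemma Nb_sub (V : {set T}) (v : T) : Nb V v \subset V :\ v.
Proof. by apply/fintype.subsetP => x; rewrite !inE => /andP[-> /andP[-> _]]. Qed.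

Lemma ypart_supp (V : {set T}) (v : T) j z : supp (Pk V j.+1) z -> supp (Pk (Nb V v) j) (ypart v z).
Proof.
move=> zV s; rewrite ffunE; case: ifP => vs; first by rewrite eqxx.
rewrite mulf_eq0 negb_or signr_eq0 /= => /zV /and3P[sV cl cs].
apply/and3P; split.
- apply/fintype.subsetP => x xs; rewrite !inE; have xv : x != v by apply: contraFneq vs => <-.
  rewrite xv (fintype.subsetP sV) //= ?inE ?xs ?orbT //.
  by move/cliqueP: cl; apply; rewrite !inE ?eqxx ?xs ?orbT.
- by apply: clique_sub cl; apply: finset.subsetUr.
- by move: cs; rewrite cardsU1 vs.
Qed.

Lemma zpart_supp (V : {set T}) (v : T) j z : supp (Pk V j) z -> supp (Pk (V :\ v) j) (zpart v z).
Proof.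
move=> zV s; rewrite ffunE; case: ifP => vs; first by rewrite eqxx.
move=> /zV /and3P[sV cl cs]; apply/and3P; split => //.
by apply/fintype.subsetP => x xs; rewrite !inE (fintype.subsetP sV) // andbT; apply: contraFneq vs => <-.
Qed.

Lemma Acyc_cone (V : {set T}) (v : T) j : v \in V -> (forall x, x \in V -> E v x) -> Acyc j V.
Proof.
move=> vV hv z zV bz; have [w0 _] := cycle_decomp v bz.
exists (cone v (zpart v z)); split.
  apply: (cone_supp (zpart_supp (v:=v) zV)) => //.
  - by rewrite finset.setD11.
  - exact: subD1set.
  - by move=> x /setD1P[_ /hv].
have h := homotopy (zpart_vfree (v:=v) (z:=z)).
have hz : bd' (zpart v z) = - ypart v z by apply/eqP; rewrite -subr_eq0 opprK w0.
have h2 : bd' (cone v (zpart v z)) = zpart v z - cone v (bd' (zpart v z)).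
  by apply/eqP; rewrite eq_sym subr_eq h.
by rewrite h2 hz linearN /= opprK -decomp.
Qed.

Lemma Acyc_step (V : {set T}) (v : T) j : v \in V -> Acyc j (Nb V v) -> Acyc j.+1 (V :\ v) ->
  Acyc j.+1 V.
Proof.
move=> vV AN AV z zV bz; have [w0 by0] := cycle_decomp v bz.
have [c [cN bc]] := AN _ (ypart_supp (v:=v) zV) by0.
have wV : supp (Pk (V :\ v) j.+1) (zpart v z + c).
  apply: suppD; first exact: zpart_supp.
  exact: supp_sub (Pk_mono (j:=j.+1) (Nb_sub V v)) cN.
have bw : bd' (zpart v z + c) = 0 by rewrite linearD /= bc.
have [e [eV be]] := AV _ wV bw.
exists (e - cone v c); split.
  apply: suppD; first exact: supp_sub (Pk_mono (j:=j.+2) (subD1set V v)) eV.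
  apply: suppN; apply: (cone_supp cN) => //.
  - by rewrite !inE eqxx /= andbF.
  - exact: fintype.subset_trans (Nb_sub V v) (subD1set V v).
  - by move=> x; rewrite !inE => /andP[_ /andP[]].
have cf : supp (vfree v) c.
  by move=> s /cN /and3P[sN _ _]; rewrite inE; apply/negP => /(fintype.subsetP sN); rewrite !inE eqxx /= andbF.
have h := homotopy cf.
rewrite linearB /= be.
have -> : bd' (cone v c) = c - cone v (ypart v z).
  by apply/eqP; rewrite eq_sym subr_eq -bc h.
by rewrite opprB addrA addrAC addrK -decomp.
Qed.

Lemma Acyc0 j : Acyc j finset.set0.
Proof.
move=> z zV _; exists 0; split; first exact: supp0.
rewrite linear0; apply/ffunP => s; rewrite ffunE; apply/esym/eqP/negPn/negP => /zV /and3P[s0 _].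
by move: s0; rewrite finset.subset0 => /eqP->; rewrite cards0.
Qed.

Lemma vanish n : forall (V : {set T}) j, (#|V| <= n)%N -> (#|V| <= j.*2.+1)%N -> Acyc j V.
Proof.
elim: n => [|n IH] V j Vn Vj.
  by move: Vn; rewrite leqn0 cards_eq0 => /eqP->; apply: Acyc0.
have [->|/set0Pn [v vV]] := eqVneq V finset.set0; first exact: Acyc0.
have [hv|] := boolP [forall x in V, E v x].
  by apply: (Acyc_cone vV) => x xV; move/forall_inP: hv; apply.
rewrite negb_forall_in => /existsP [u /andP[uV nvu]].
have uv : u != v by apply: contraNneq nvu => ->.
have cV := cardsD1 v V; rewrite vV in cV.
have cV' := cardsD1 u (V :\ v); rewrite !inE uv uV in cV'.
have cN : (#|Nb V v| <= #|V :\ v :\ u|)%N.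
  apply: subset_leq_card; apply/fintype.subsetP => x; rewrite !inE.
  case/andP=> xV /andP[xv Evx]; rewrite xV xv andbT /= andbT.
  by apply: contraNneq nvu => <-.
case: j Vj => [|j] Vj; first by move: Vj cV cV'; lia.
apply: (Acyc_step vV); apply: IH; lia.
Qed.

End Graph.

Lemma incid_bdB (s u : {set T}) : (2 <= #|s|)%N -> incid F s u = bdB s u.
Proof.
move=> s2; rewrite /incid /bdB sum_ffunE.
have [/exists_inP [x xs /eqP ->]|nx] := boolP [exists x in s, u == s :\ x].
  have eD : s :\: (s :\ x) = [set x].
    apply/setP => y; rewrite !inE; case: (y =P x) => [->|]; rewrite ?xs //=.
    by move=> _; rewrite andNb.
  have n0 : s :\ x != finset.set0.
    rewrite -cards_eq0; have := cardsD1 x s; rewrite xs; move: s2; lia.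
  rewrite subD1set eD cards1 n0 /= big_set1.
  rewrite (bigD1 x) //= big1 => [|y /andP[ys yx]]; last first.
    rewrite ffunE dlE scFo; case: eqP => [e|_]; last by rewrite mulr0.
    have : x \in s :\ y by rewrite !inE xs andbT eq_sym.
    by rewrite -e finset.setD11.
  by rewrite ffunE dlE eqxx scFo mulr1 addr0.
rewrite [RHS]big1 => [|x xs]; last first.
  rewrite ffunE dlE scFo; case: eqP => [e|_]; last by rewrite mulr0.
  by move/negP: nx; case; apply/exists_inP; exists x => //; apply/eqP.
case: ifP => // /and3P[us /cards1P [x ex] _]; move/negP: nx; case.
have xsu : x \in s :\: u by rewrite ex set11.
have xs : x \in s by move: xsu; rewrite inE => /andP[].
apply/exists_inP; exists x => //; apply/eqP/setP => y; rewrite !inE.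
have [yu|yu] := boolP (y \in u).
  rewrite (fintype.subsetP us) // andbT; apply/esym/eqP => yx.
  by move: xsu; rewrite inE -yx yu.
have [ys|ys] := boolP (y \in s); rewrite ?andbF // andbT.
have : y \in s :\: u by rewrite inE yu ys.
by rewrite ex inE => /eqP ->; rewrite eqxx.
Qed.

Lemma bd_fun_lin : linear (@bd_fun F T).
Proof.
move=> a c1 c2; apply/ffunP => u; rewrite !ffunE.
rewrite scaler_sumr -big_split /=.
by apply: eq_bigr => s _; rewrite !ffunE mulrDl -!mulrA.
Qed.

HB.instance Definition _ := GRing.isLinear.Build _ _ _ _ (@bd_fun F T) bd_fun_lin.

Lemma bdE c : bd F T c = bd_fun c.
Proof. exact: lfunE. Qed.

Lemma bd_bd' c : supp (fun s => (2 <= #|s|)%N) c -> bd F T c = bd' c.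
Proof.
move=> h; rewrite bdE; apply/ffunP => u; rewrite ffunE bd'E; apply: eq_bigr => s _.
have [/eqP->|/h s2] := boolP (c s == 0); first by rewrite !mul0r.
by rewrite incid_bdB.
Qed.

Lemma chainsP k (K : {set {set T}}) c :
  reflect (supp (fun s => (s \in K) && (#|s| == k.+1)) c) (c \in chains F k K).
Proof.
set X := [seq delta_ch F s | s <- enum [set s in K | #|s| == k.+1]].
apply: (iffP idP) => [hc|hs].
  have e := @coord_span _ _ _ (in_tuple X) c hc.
  move=> s; rewrite e sum_ffunE => /sum_nz_ex [i /andP[_]].
  rewrite ffunE scFo mulf_eq0 negb_or => /andP[_].
  have : X`_i \in X by apply: mem_nth; rewrite -{2}(size_tuple (in_tuple X)).
  case/mapP => t; rewrite mem_enum inE => /andP[tK tc] ->.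
  by rewrite dlE; case: (s =P t) => [->|_]; rewrite ?eqxx // tK.
rewrite (chain_expand c); apply: rpred_sum => s _.
have [/eqP->|/hs /andP[sK sc]] := boolP (c s == 0); first by rewrite scale0r mem0v.
apply: rpredZ; apply: memv_span; apply: map_f.
by rewrite mem_enum inE sK.
Qed.

Lemma homology_vanish (E : rel T) k (K : {set {set T}}) : (1 <= k)%N ->
  (forall s, (s \in K) = (s != finset.set0) && clique E s) ->
  Acyc E k [set: T] -> homology_dim F k K = 0%N.
Proof.
move=> k1 hK A; apply/eqP; rewrite subn_eq0; apply: dimvS.
apply/subvP => z /memv_capP [/chainsP zc]; rewrite memv_ker => /eqP bz.
have zP : supp (Pk E [set: T] k) z.
  move=> s /zc /andP[]; rewrite hK => /andP[_ cl] cs.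
  by rewrite /Pk finset.subsetT cl cs.
have bz' : bd' z = 0.
  rewrite -bz bd_bd' // => s /zc /andP[_ /eqP ->]; lia.
have [e [eP be]] := A _ zP bz'.
apply/memv_imgP; exists e.
  apply/chainsP => s /eP /and3P[_ cl cs]; rewrite hK cl cs andbT /= -cards_eq0.
  by rewrite (eqP cs).
rewrite bd_bd' // => s /eP /and3P[_ _ /eqP ->]; lia.
Qed.

End Chains.

Section DI.
Variables (R : realType) (T : finType) (d : R -> T -> T -> R).
Hypothesis hd : isDMS d.

Lemma dI_lb a b x y t : t \in `[a, b] -> dI d a b x y <= d t x y.
Proof.
move=> tI; apply: ge_inf; last by exists t.
exists 0 => r [s _ <-]; case: hd => /(_ s) [h0 _ _ _] _; exact: h0.
Qed.

Lemma dI_refl a b x : a <= b -> dI d a b x x <= 0.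
Proof.
move=> ab; case: hd => /(_ a) [_ h _ _] _; rewrite -(h x); apply: dI_lb.
by rewrite in_itv /= lexx ab.
Qed.

Lemma dI_sym a b x y : dI d a b x y = dI d a b y x.
Proof.
rewrite /dI; congr inf; apply/seteqP; split => r [t tI <-]; exists t => //;
  case: hd => /(_ t) [_ _ h _] _; exact: h.
Qed.

Lemma dI_mono a b a' b' x y : a <= b -> a' <= a -> b <= b' ->
  dI d a' b' x y <= dI d a b x y.
Proof.
move=> ab a'a bb'; apply: lb_le_inf.
  exists (d a x y), a => //; by rewrite /= in_itv /= lexx ab.
move=> r [t tI <-]; apply: dI_lb.
move: tI; rewrite /= !in_itv /= => /andP[h1 h2].
by rewrite (le_trans a'a h1) (le_trans h2 bb').
Qed.
End DI.

Section H0.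
Variables (F : fieldType) (T : finType).

Lemma bd_single (x : T) : bd F T (delta_ch F [set x]) = 0.
Proof.
rewrite bdE; apply/ffunP => u; rewrite !ffunE (bigD1 [set x]) //= big1 => [|s sx].
  rewrite ffunE eqxx mul1r addr0 /incid; case: ifP => // /and3P[us /eqP c1 u0].
  move: c1; rewrite cardsD (finset.setIidPr us) cards1.
  by move: u0; rewrite -cards_eq0; case: #|u| => [|[|n]].
by rewrite ffunE (negPf sx) mul0r.
Qed.

Lemma h0_two (E : rel T) (Erefl : forall x, E x x) (K : {set {set T}}) (x y : T) :
  #|T| = 2%N -> x != y -> ~~ E x y ->
  (forall s, (s \in K) = (s != finset.set0) && clique E s) ->
  (2 <= homology_dim F 0 K)%N.
Proof.
move=> cT xy nE hK.
have c1 : chains F 1 K = 0%VS.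
  apply/eqP; rewrite -subv0; apply/subvP => c /chainsP hc; rewrite memv0.
  apply/eqP/ffunP => s; rewrite ffunE; apply/eqP/negPn/negP => /hc.
  rewrite hK => /andP[/andP[_ cl] /eqP cs].
  have sT : s = [set: T].
    by apply/eqP; rewrite eqEcard finset.subsetT finset.cardsT cT cs.
  by move/cliqueP: cl => /(_ x y); rewrite sT !inE => /(_ isT isT); apply/negP.
rewrite /homology_dim /boundaries c1 limg0 dimv0 subn0.
set a := delta_ch F [set x]; set b := delta_ch F [set y].
have inC (w : T) : delta_ch F [set w] \in cycles F 0 K.
  rewrite memv_cap memv_ker bd_single eqxx andbT; apply/chainsP => s.
  rewrite ffunE; case: (s =P [set w]) => [->|]; last by rewrite eqxx.
  move=> _; rewrite hK cards1 eqxx andbT -cards_eq0 cards1 /=.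
  by apply/cliqueP => p q; rewrite !inE => /eqP-> /eqP->.
have sub : (<<[:: a; b]>> <= cycles F 0 K)%VS.
  by apply/span_subvP => w; rewrite !inE => /orP[] /eqP ->; apply: inC.
apply: leq_trans (dimvS sub).
have a0 : a != 0.
  by apply/eqP => /ffunP /(_ [set x]); rewrite !ffunE eqxx; apply/eqP; rewrite oner_eq0.
have b0 : b != 0.
  by apply/eqP => /ffunP /(_ [set y]); rewrite !ffunE eqxx; apply/eqP; rewrite oner_eq0.
have dis : (<[a]> :&: <[b]> = 0)%VS.
  apply/eqP; rewrite -subv0; apply/subvP => w /memv_capP [/vlineP [k1 ->] /vlineP [k2 e]].
  rewrite memv0; move/ffunP: e => /(_ [set x]); rewrite !ffunE eqxx.
  have -> : ([set x] == [set y]) = false by apply/negbTE; rewrite eqEcard !finset.sub1set !inE (negPf xy).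
  rewrite scFo mulr1 (_ : false%:R = 0 :> F) // scFo mulr0 => ->; by rewrite scale0r.
by rewrite span_cons span_seq1 dimv_disjoint_sum // !dim_vline a0 b0.
Qed.
End H0.

Lemma mem_rips (R : realType) (T : finType) (m : T -> T -> R) (dl : R) (s : {set T}) :
  (s \in rips m dl) = (s != finset.set0) && clique (fun x y => m x y <= dl) s.
Proof.
rewrite inE; congr andb; apply: eq_forallb => x; congr (_ ==> _).
by apply: eq_forallb => y; rewrite asboolb.
Qed.

Lemma clique_eq (T : finType) (E E' : rel T) (s : {set T}) :
  (forall x y, E x y = E' x y) -> clique E s = clique E' s.
Proof.
move=> h; apply: eq_forallb => x; congr (_ ==> _).
by apply: eq_forallb => y; rewrite h.
Qed.

Unset Implicit Arguments.

Theorem mainTheorem1 (R : realType) (F : fieldType) (k : nat) (T : finType)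
  (d : R -> T -> T -> R)
  (hcard : #|T| = (2 * k + 2)%N) (hd : isDMS d)
  (a b delta a' b' delta' : R)
  (hab : a <= b) (hdelta : 0 <= delta)
  (hab' : a' <= b') (hdelta' : 0 <= delta')
  (hpq : [/\ a' <= a, b <= b' & delta <= delta'])
  (hp : homology_dim F k (Rlev d a b delta) = 1%N)
  (hq : homology_dim F k (Rlev d a' b' delta') = 1%N) :
  Rlev d a b delta = Rlev d a' b' delta' /\
  induced_iso F k (Rlev d a b delta) (Rlev d a' b' delta').
Proof.
case: hpq => a'a bb' dd'.
pose E : rel T := fun x y => dI d a b x y <= delta.
pose E' : rel T := fun x y => dI d a' b' x y <= delta'.
have Erefl : forall x, E x x by move=> x; exact: le_trans (dI_refl hd x hab) hdelta.
have Erefl' : forall x, E' x x by move=> x; exact: le_trans (dI_refl hd x hab') hdelta'.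
have Esym : forall x y, E x y = E y x by move=> x y; rewrite /E dI_sym.
have Esym' : forall x y, E' x y = E' y x by move=> x y; rewrite /E' dI_sym.
have EE' : forall x y, E x y -> E' x y.
  move=> x y h; apply: le_trans (dI_mono hd x y hab a'a bb') _.
  exact: le_trans h dd'.
have memK : forall s, (s \in Rlev d a b delta) = (s != finset.set0) && clique E s.
  by move=> s; rewrite /Rlev mem_rips.
have memL : forall s, (s \in Rlev d a' b' delta') = (s != finset.set0) && clique E' s.
  by move=> s; rewrite /Rlev mem_rips.
suff EqE : forall x y, E x y = E' x y.
  have eqK : Rlev d a b delta = Rlev d a' b' delta'.
    by apply/setP => s; rewrite memK memL (clique_eq s EqE).
  by split => //; rewrite -eqK /induced_iso capvSr addvSl.
move=> x y; apply/idP/idP; first exact: EE'.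
move=> h'; case: k hcard hp hq => [|j] hcard hp hq.
  have [->|xy] := eqVneq x y; first exact: Erefl.
  apply/negPn/negP => nE.
  have := h0_two F Erefl hcard xy nE memK; rewrite hp //.
have claimA : forall v u1 u2, u1 != u2 -> ~~ E v u1 -> ~~ E v u2 -> False.
  move=> v u1 u2 u12 n1 n2.
  have u1v : u1 != v by apply: contraNneq n1 => ->.
  have u2v : u2 != v by apply: contraNneq n2 => ->.
  have c1 := cardsD1 v [set: T]; rewrite finset.in_setT finset.cardsT hcard in c1.
  have c2 := cardsD1 u1 ([set: T] :\ v); rewrite !inE u1v /= in c2.
  have c3 := cardsD1 u2 ([set: T] :\ v :\ u1); rewrite !inE u2v eq_sym u12 /= in c3.
  have cN : (#|Nb E [set: T] v| <= #|[set: T] :\ v :\ u1 :\ u2|)%N.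
    apply: subset_leq_card; apply/fintype.subsetP => w; rewrite !inE.
    case/and3P=> _ wv Evw; rewrite wv /= andbT.
    by apply/andP; split; apply/eqP => e; [move: n2 | move: n1]; rewrite -e Evw.
  have A : Acyc F E j.+1 [set: T].
    apply: (Acyc_step Erefl Esym (v:=v)) => //.
      by apply: (vanish Erefl Esym (n := #|Nb E [set: T] v|)) => //; lia.
    by apply: (vanish Erefl Esym (n := #|[set: T] :\ v|)) => //; lia.
  have := homology_vanish (F:=F) (k:=j.+1) (K:=Rlev d a b delta) isT memK A.
  by rewrite hp.
have claimB : forall v, exists u, ~~ E' v u.
  move=> v; have [hv|] := boolP [forall u, E' v u]; last first.
    by rewrite negb_forall => /existsP [u nu]; exists u.
  exfalso.
  have A : Acyc F E' j.+1 [set: T].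
    apply: (Acyc_cone Erefl' Esym' (v:=v)) => // w _.
    by move/forallP: hv; apply.
  have := homology_vanish (F:=F) (k:=j.+1) (K:=Rlev d a' b' delta') isT memL A.
  by rewrite hq.
have [->|xy] := eqVneq x y; first exact: Erefl.
apply/negPn/negP => nE.
have [u nu] := claimB x.
have nEu : ~~ E x u by apply: contra nu; apply: EE'.
have yu : y != u by apply: contraNneq nu => <-; rewrite h'.
exact: (claimA x y u yu nE nEu).
Qed.
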